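(* Let $0<p<2$, let $G=(V,E)$ be a graph with $V=\{1,\dots,n\}$, and let $c$ be a real number. Consider the optimization problem $\tilde{F}_{BS}^{p}$ in the variables of a symmetric matrix $Z=[z_{ij}]_{i,j=1}^n$: $$\min \ \frac{1}{2^{p/2}}\sum_{\{i,j\}\in E} z_{ij}^{p/2}$$ subject to $$z_{ij}^{p/2}+z_{jk}^{p/2}\ge z_{ik}^{p/2}\quad \forall i,j,k,\qquad \sum_{i<j} z_{ij}\ge c(1-c)n^2,\qquad z_{ii}=0\ \ \forall i,\qquad \mathbf{1}-Z\succeq 0,$$ where $\mathbf{1}$ is the $n\times n$ matrix with all entries equal to $1$. Then $\tilde{F}_{BS}^{p}$ is a concave program: its objective function is concave and its feasible set is convex.
   Context: A concave program is an optimization problem of the form $\min_{x\in C} f(x)$ where $C\subseteq\mathbb{R}^d$ is a convex set and $f$ is a concave function (i.e. $f(\lambda x+(1-\lambda)y)\ge \lambda f(x)+(1-\lambda)f(y)$ for all $x,y$ in its convex domain and $\lambda\in[0,1]$). The variables $z_{ij}$ are understood to be nonnegative reals, so that $z^{p/2}$ is defined; $M\succeq 0$ means $M$ is positive semidefinite. *)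

(* Defs.v *)
From mathcomp Require Import all_boot all_order all_algebra.
From mathcomp Require Import reals exp.
Set Implicit Arguments. Unset Strict Implicit. Unset Printing Implicit Defensive.
Import Order.TTheory GRing.Theory Num.Theory.
Local Open Scope ring_scope.

Section BS.
Variables (R : realType) (n : nat).

(* Natural domain of the variables: symmetric matrices with nonnegative entries
   (z_ij are nonnegative reals so that z^(p/2) is defined). *)
Definition bs_domain (Z : 'M[R]_n) : Prop :=
  Z^T = Z /\ (forall i j, 0 <= Z i j).

Definition psdmx (M : 'M[R]_n) : Prop :=
  forall x : 'cV[R]_n, 0 <= (x^T *m M *m x) 0 0.

Definition ones_mx : 'M[R]_n := const_mx 1.

(* Objective  2^{-p/2} * sum_{ {i,j} in E } z_ij^{p/2};  each unordered edge
   {i,j} (i < j) counted once. *)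
Definition bs_objective (p : R) (E : rel 'I_n) (Z : 'M[R]_n) : R :=
  (2 `^ (p / 2))^-1 *
    \sum_(i : 'I_n) \sum_(j : 'I_n | (i < j)%N && E i j) Z i j `^ (p / 2).

Definition bs_feasible (p c : R) (Z : 'M[R]_n) : Prop :=
  [/\ bs_domain Z,
      (forall i j k : 'I_n, Z i k `^ (p / 2) <= Z i j `^ (p / 2) + Z j k `^ (p / 2)),
      c * (1 - c) * (n%:R) ^+ 2 <= \sum_(i : 'I_n) \sum_(j : 'I_n | (i < j)%N) Z i j,
      (forall i, Z i i = 0)
    & psdmx (ones_mx - Z)].

End BS.

Definition convex_set_mx (R : realType) (n : nat) (C : 'M[R]_n -> Prop) : Prop :=
  forall (X Y : 'M[R]_n) (l : R), C X -> C Y -> 0 <= l <= 1 ->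
    C (l *: X + (1 - l) *: Y).

Definition concave_on_mx (R : realType) (n : nat) (D : 'M[R]_n -> Prop)
  (f : 'M[R]_n -> R) : Prop :=
  forall (X Y : 'M[R]_n) (l : R), D X -> D Y -> 0 <= l <= 1 ->
    l * f X + (1 - l) * f Y <= f (l *: X + (1 - l) *: Y).

(* Main.v *)
Require Import Defs.
From mathcomp Require Import all_boot all_order all_algebra.
From mathcomp Require Import interval_inference reals exp convex hoelder.
From mathcomp Require Import boolp classical_sets set_interval ring.
Import Order.TTheory GRing.Theory Num.Theory.
Local Open Scope ring_scope.

Section S.
Variable R : realType.

Lemma concave_powR (q a b t : R) : 0 < q <= 1 -> 0 <= a -> 0 <= b -> 0 <= t <= 1 ->
  t * a `^ q + (1 - t) * b `^ q <= (t * a + (1 - t) * b) `^ q.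
Proof.
move=> /andP[q0 q1] a0 b0 /andP[t0 t1].
have iq1 : 1 <= q^-1 by rewrite invf_ge1.
have := @convex_powR R _ iq1 (Itv01 t0 t1) (a `^ q) (b `^ q).
rewrite !inE /= !in_itv /= !andbT !powR_ge0 => /(_ isT isT).
move=> H.
have H' : (t * a`^q + (1-t)* b`^q) `^ q^-1 <= t * (a `^ q) `^ q^-1 + (1-t) * (b `^ q) `^ q^-1 by exact H.
move: H'; rewrite -!powRrM !mulfV ?gt_eqF // !powRr1 // => H'.
have hs : 0 <= t * a`^q + (1-t)* b`^q by rewrite addr_ge0 // mulr_ge0 ?powR_ge0 ?subr_ge0.
have := @ge0_ler_powR R q (ltW q0) _ _ _ _ H'.
rewrite -powRrM mulVf ?gt_eqF // powRr1 //; apply.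
- by rewrite nnegrE powR_ge0.
- by rewrite nnegrE addr_ge0 // mulr_ge0 ?subr_ge0.
Qed.

Lemma powR_split (q t c : R) : 0 <= t -> 0 <= c ->
  t `^ (1 - q) * (t * c) `^ q = t * c `^ q.
Proof.
move=> t0 c0; rewrite powRM // mulrA -powRD; last by rewrite subrK oner_eq0.
by rewrite subrK powRr1.
Qed.

Lemma wpow (q a b t : R) : 0 < q < 1 -> 0 <= a -> 0 <= b -> 0 <= t <= 1 ->
  t `^ (1 - q) * a `^ q + (1 - t) `^ (1 - q) * b `^ q <= (a + b) `^ q.
Proof.
move=> /andP[q0 q1] a0 b0 /andP[t0 t1].
have q1' : 1 - q != 0 by rewrite subr_eq0 eq_sym lt_eqF.
have mono : forall x y, 0 <= x -> x <= y -> x `^ q <= y `^ q.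
  move=> x y x0 xy; apply: ge0_ler_powR; rewrite ?nnegrE ?(ltW q0) ?(le_trans x0 xy) //.
have [->|tn0] := eqVneq t 0.
  rewrite powR0 // mul0r add0r subr0 powR1 mul1r; apply: mono => //.
  by rewrite lerDr.
have [->|tn1] := eqVneq t 1.
  rewrite subrr powR0 // mul0r addr0 powR1 mul1r; apply: mono => //.
  by rewrite lerDl.
have tp : 0 < t by rewrite lt_neqAle eq_sym tn0.
have tp1 : 0 < 1 - t by rewrite subr_gt0 lt_neqAle tn1.
have ea : a = t * (a / t) by rewrite mulrC divfK ?gt_eqF.
have eb : b = (1 - t) * (b / (1 - t)) by rewrite mulrC divfK ?gt_eqF.
have hc : 0 < q <= 1 by rewrite q0 ltW.
have ha : 0 <= a / t by rewrite divr_ge0 // ltW.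
have hb : 0 <= b / (1 - t) by rewrite divr_ge0 // ltW.
have ht : 0 <= t <= 1 by rewrite t0 t1.
have := @concave_powR q _ _ t hc ha hb ht.
rewrite -ea -eb; apply: le_trans.
rewrite {1}ea {1}eb !powR_split //; exact: ltW.
Qed.

Lemma superadd (q a1 a2 b1 b2 c1 c2 : R) : 0 < q < 1 ->
  0 <= a1 -> 0 <= a2 -> 0 <= b1 -> 0 <= b2 -> 0 <= c1 -> 0 <= c2 ->
  c1 `^ q <= a1 `^ q + b1 `^ q -> c2 `^ q <= a2 `^ q + b2 `^ q ->
  (c1 + c2) `^ q <= (a1 + a2) `^ q + (b1 + b2) `^ q.
Proof.
move=> /andP[q0 q1] a10 a20 b10 b20 c10 c20 h1 h2.
set C := c1 + c2.
have C0 : 0 <= C by rewrite addr_ge0.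
have [CE|Cn0] := eqVneq C 0.
  by rewrite CE powR0 ?gt_eqF // addr_ge0 // powR_ge0.
have Cp : 0 < C by rewrite lt_neqAle eq_sym Cn0.
set t := c1 / C.
have t0 : 0 <= t by rewrite divr_ge0.
have t1 : t <= 1 by rewrite ler_pdivrMr // mul1r lerDl.
have ec1 : c1 = t * C by rewrite /t divfK ?gt_eqF.
have ec2 : c2 = (1 - t) * C by rewrite mulrBl mul1r -ec1 /C addrC addKr.
have ha := @wpow q a1 a2 t _ a10 a20 _.
have hb := @wpow q b1 b2 t _ b10 b20 _.
rewrite q0 q1 t0 t1 /= in ha hb.
have ht : 0 <= t `^ (1 - q) by apply: powR_ge0.
have ht' : 0 <= (1 - t) `^ (1 - q) by apply: powR_ge0.
apply: le_trans (lerD (ha isT isT) (hb isT isT)).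
rewrite addrACA -!mulrDr.
apply: le_trans (lerD (ler_wpM2l ht h1) (ler_wpM2l ht' h2)).
rewrite ec1 ec2 !powR_split //; last by rewrite subr_ge0.
by rewrite -mulrDl addrC subrK mul1r.
Qed.

Lemma lin_entry (n : nat) (l : R) (X Y : 'M[R]_n) i j :
  (l *: X + (1 - l) *: Y) i j = l * X i j + (1 - l) * Y i j.
Proof. by rewrite !mxE. Qed.

Lemma sum_lin (n : nat) (l : R) (X Y : 'M[R]_n) (P : 'I_n -> 'I_n -> bool) (f : R -> R) :
  \sum_(i : 'I_n) \sum_(j : 'I_n | P i j) (l * f (X i j) + (1 - l) * f (Y i j)) =
  l * \sum_(i : 'I_n) \sum_(j : 'I_n | P i j) f (X i j) +
  (1 - l) * \sum_(i : 'I_n) \sum_(j : 'I_n | P i j) f (Y i j).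
Proof.
rewrite !big_distrr -big_split /=; apply: eq_bigr => i _.
by rewrite !big_distrr -big_split.
Qed.

Lemma scaled (q l x y w : R) : 0 <= l -> 0 <= x -> 0 <= y -> 0 <= w ->
  x `^ q <= y `^ q + w `^ q -> (l * x) `^ q <= (l * y) `^ q + (l * w) `^ q.
Proof.
move=> l0 x0 y0 w0 h; rewrite !powRM // -mulrDr.
by apply: ler_wpM2l => //; apply: powR_ge0.
Qed.
End S.

Theorem mainTheorem1 (R : realType) (n : nat) (E : rel 'I_n)
  (E_sym : symmetric E) (E_irr : irreflexive E) (p c : R)
  (hp0 : 0 < p) (hp2 : p < 2) :
  [/\ convex_set_mx (@bs_domain R n),
      concave_on_mx (@bs_domain R n) (bs_objective p E)
    & convex_set_mx (@bs_feasible R n p c)].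
Proof.
have q0 : 0 < p / 2 by rewrite divr_gt0.
have q1 : p / 2 < 1 by rewrite ltr_pdivrMr // mul1r.
have dom : convex_set_mx (@bs_domain R n).
  move=> X Y l [hX hX0] [hY hY0] /andP[l0 l1]; split.
    apply/matrixP => i j; rewrite mxE !lin_entry.
    have := congr1 (fun M : 'M[R]_n => M i j) hX; have := congr1 (fun M : 'M[R]_n => M i j) hY.
    by rewrite !mxE => -> ->.
  move=> i j; rewrite lin_entry addr_ge0 // mulr_ge0 // subr_ge0 //.
split => //.
  move=> X Y l [hX hX0] [hY hY0] /andP[l0 l1]; rewrite /bs_objective.
  rewrite mulrCA [(1 - l) * _]mulrCA -mulrDr; apply: ler_wpM2l.
    by rewrite invr_ge0 powR_ge0.
  rewrite -(@sum_lin _ _ l X Y (fun i j => ((i < j)%N && E i j)) (fun x => x `^ (p / 2))).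
  apply: ler_sum => i _; apply: ler_sum => j _.
  rewrite lin_entry; apply: concave_powR => //; first by rewrite q0 ltW.
  by rewrite l0.
move=> X Y l [dX tX sX zX pX] [dY tY sY zY pY] hl.
have /andP[l0 l1] := hl.
have l0' : 0 <= 1 - l by rewrite subr_ge0.
case: (dX) => _ X0; case: (dY) => _ Y0.
split.
- exact: dom.
- move=> i j k; rewrite !lin_entry.
  apply: superadd; rewrite ?q0 ?q1 ?mulr_ge0 //.
    by apply: scaled.
  by apply: scaled.
- under eq_bigr => i _ do under eq_bigr => j _ do rewrite lin_entry.
  rewrite (@sum_lin _ _ l X Y (fun i j => (i < j)%N) id) /=.
  apply: le_trans (lerD (ler_wpM2l l0 sX) (ler_wpM2l l0' sY)).
  by rewrite -mulrDl subrKC mul1r.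
- by move=> i; rewrite lin_entry zX zY !mulr0 addr0.
- move=> x.
  have -> : ones_mx R n - (l *: X + (1 - l) *: Y) =
            l *: (ones_mx R n - X) + (1 - l) *: (ones_mx R n - Y).
    apply/matrixP => i j; rewrite /ones_mx !mxE; ring.
  rewrite mulmxDr mulmxDl -!scalemxAr -!scalemxAl !mxE.
  move: (pX x) (pY x); rewrite !mxE => hx hy.
  by rewrite addr_ge0 // mulr_ge0.
Qed.
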